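(* For all connected graphs $G_1$ and $G_2$, $$\operatorname{tw}(G_1\times G_2)\leq \tau(G_1)(\operatorname{tw}(G_2)+1)(\Delta(G_2)+1)\quad\text{and}\quad \operatorname{pw}(G_1\times G_2)\leq \tau(G_1)(\operatorname{pw}(G_2)+1)(\Delta(G_2)+1).$$
   Context: $\operatorname{tw}$ and $\operatorname{pw}$ denote treewidth and pathwidth; $\Delta$ denotes maximum degree. The vertex cover number $\tau(G)$ is the minimum size of a set $A\subseteq V(G)$ such that $V(G)\setminus A$ is an independent set. The direct product $G_1 \times G_2$ has vertex set $V(G_1)\times V(G_2)$, with $(a,v)(b,u)$ an edge iff $ab\in E(G_1)$ and $uv\in E(G_2)$. *)

(* Defs.v *)
(* Finite simple graphs are given as (T : finType, e : rel T)
   with e symmetric and irreflexive. *)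
From Stdlib Require Import ClassicalEpsilon.
From mathcomp Require Import all_boot.
Set Implicit Arguments. Unset Strict Implicit. Unset Printing Implicit Defensive.

Section Graphs.
Variables (T : finType) (e : rel T).

Definition connected_graph : Prop := forall x y : T, connect e x y.

Definition max_degree : nat := \max_(x : T) #|[set y | e x y]|.

Definition is_vertex_cover (A : {set T}) : bool :=
  [forall x, forall y, e x y ==> (x \in A) || (y \in A)].

Definition vc_pred (k : nat) : bool :=
  [exists A : {set T}, is_vertex_cover A && (#|A| == k)].

Lemma vc_pred_ex : exists k, vc_pred k.
Proof.
exists #|[set: T]|; apply/existsP; exists [set: T].
rewrite eqxx andbT; apply/forallP => x; apply/forallP => y.
by rewrite in_setT implybT.
Qed.

Definition vertex_cover_number : nat := ex_minn vc_pred_ex.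

Definition is_tree (n : nat) (et : rel 'I_n) : Prop :=
  0 < n /\ symmetric et /\ irreflexive et /\
  (forall i j : 'I_n, connect et i j) /\
  #|[set p : 'I_n * 'I_n | et p.1 p.2]| = 2 * (n - 1).

Definition path_rel (n : nat) : rel 'I_n :=
  fun i j => (i.+1 == j :> nat) || (j.+1 == i :> nat).

Definition is_decomposition (n : nat) (et : rel 'I_n) (B : 'I_n -> {set T})
  : Prop :=
  (forall v : T, exists i, v \in B i) /\
  (forall u v : T, e u v -> exists i, (u \in B i) && (v \in B i)) /\
  (forall (v : T) (i j : 'I_n), v \in B i -> v \in B j ->
     connect (fun a b => [&& et a b, v \in B a & v \in B b]) i j).

Definition width (n : nat) (B : 'I_n -> {set T}) : nat :=
  (\max_(i < n) #|B i|).-1.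

Definition tw_prop (k : nat) : Prop :=
  exists n (et : rel 'I_n) (B : 'I_n -> {set T}),
    is_tree et /\ is_decomposition et B /\ width B <= k.

Definition pw_prop (k : nat) : Prop :=
  exists n (B : 'I_n -> {set T}),
    0 < n /\ is_decomposition (@path_rel n) B /\ width B <= k.

Definition tw_pred (k : nat) : bool :=
  if excluded_middle_informative (tw_prop k) then true else false.
Definition pw_pred (k : nat) : bool :=
  if excluded_middle_informative (pw_prop k) then true else false.

Let B1 : 'I_1 -> {set T} := fun _ => [set: T].

Lemma trivial_dec (et : rel 'I_1) : is_decomposition et B1.
Proof.
split; first by move=> v; exists ord0; rewrite in_setT.
split; first by move=> u v _; exists ord0; rewrite !in_setT.
move=> v i j _ _; have -> : i = j by apply/val_inj; case: i j => [[|?] ?] [[|?] ?].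
exact: connect0.
Qed.

Lemma tw_pred_ex : exists k, tw_pred k.
Proof.
exists (width B1); rewrite /tw_pred; case: excluded_middle_informative => // H.
exfalso; apply: H; exists 1, (fun _ _ => false), B1; split; last first.
  by split; [exact: trivial_dec | ].
split=> //; split=> //; split=> //; split.
  by move=> i j; have -> : i = j by apply/val_inj; case: i j => [[|?] ?] [[|?] ?].
by apply/eqP; rewrite cards_eq0; apply/eqP/setP => p; rewrite !inE.
Qed.

Lemma pw_pred_ex : exists k, pw_pred k.
Proof.
exists (width B1); rewrite /pw_pred; case: excluded_middle_informative => // H.
by exfalso; apply: H; exists 1, B1; split=> //; split; [exact: trivial_dec|].
Qed.

Definition treewidth : nat := ex_minn tw_pred_ex.
Definition pathwidth : nat := ex_minn pw_pred_ex.

End Graphs.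

Definition direct_prod (T1 T2 : finType) (e1 : rel T1) (e2 : rel T2)
  : rel (T1 * T2)%type :=
  fun x y => e1 x.1 y.1 && e2 x.2 y.2.

(* Main.v *)
Require Import Defs.
From Stdlib Require Import ClassicalEpsilon.
From mathcomp Require Import all_boot.
From mathcomp Require Import zify.
Set Implicit Arguments. Unset Strict Implicit. Unset Printing Implicit Defensive.

Lemma connect_map (S S' : finType) (e : rel S) (e' : rel S') (h : S -> S') :
  (forall a b, e a b -> e' (h a) (h b)) ->
  forall x y, connect e x y -> connect e' (h x) (h y).
Proof.
move=> He x _ /connectP[p ep ->]; elim: p x ep => [|z p IH] x /=.
  by move=> _; exact: connect0.
case/andP=> exz /IH; apply: connect_trans; apply: connect1; exact: He.
Qed.

Lemma connect_lift (S S' : finType) (e : rel S) (e' : rel S') (h : S' -> S)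
  (P : pred S) :
  (forall x, P x -> exists x', h x' = x) ->
  (forall x' y', P (h x') -> P (h y') -> (h x' = h y') \/ e (h x') (h y') ->
     connect e' x' y') ->
  forall x y, P x -> connect (fun a b => [&& e a b, P a & P b]) x y ->
  forall x' y', h x' = x -> h y' = y -> connect e' x' y'.
Proof.
move=> Hs Hc x _ Px /connectP[p ep ->]; elim: p x Px ep => [|z p IH] x Px /=.
  by move=> _ x' y' hx hy; apply: Hc; rewrite ?hx ?hy //; left.
case/andP=> /and3P[exz _ Pz] pz x' y' hx hy.
have IHz := IH z Pz pz.
have [z' hz] := Hs z Pz.
apply: (connect_trans (y := z')); last exact: IHz.
by apply: Hc; rewrite ?hx ?hz //; right.
Qed.

Lemma interval_connect m (Q : pred 'I_m) (i j : 'I_m) :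
  i <= j -> (forall k : 'I_m, i <= k <= j -> Q k) ->
  connect (fun a b : 'I_m => [&& (a.+1 == b :> nat) || (b.+1 == a :> nat), Q a & Q b]) i j.
Proof.
move=> lij; have [d Hd] : exists d, d = j - i by eexists.
elim: d j lij Hd => [|d IH] j lij Hd HQ.
  have -> : i = j by apply/val_inj; rewrite /=; lia.
  exact: connect0.
have jp : j.-1 < m by have := ltn_ord j; lia.
set j' := Ordinal jp.
apply: (connect_trans (y := j')).
  apply: IH; rewrite /= //; try lia.
  by move=> k /andP[a b]; apply: HQ; rewrite a /=; apply: leq_trans b _; lia.
apply: connect1; rewrite /= (_ : j'.+1 == j :> nat); last by apply/eqP => /=; lia.
by rewrite !HQ //= ?leqnn; lia.
Qed.

Lemma card_setE (T : finType) (P : pred T) : #|[set x | P x]| = \sum_x (P x : nat).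
Proof.
rewrite -sum1_card big_mkcond /=; apply: eq_bigr => x _; rewrite inE.
by case: (P x).
Qed.

Lemma sum_eq1 (I : finType) (j : I) : \sum_(i : I) ((j == i) : nat) = 1.
Proof.
rewrite (bigD1 j) //= eqxx big1 // => i /negPf; rewrite eq_sym => ->.
by [].
Qed.

Definition NB (T : finType) (e : rel T) (X : {set T}) : {set T} :=
  [set w | [exists u in X, (u == w) || e u w]].

Lemma NB_sub (T : finType) (e : rel T) (X Y : {set T}) w :
  X \subset Y -> w \in NB e X -> w \in NB e Y.
Proof.
move=> /subsetP sXY; rewrite !inE => /existsP[u /andP[uX H]].
by apply/existsP; exists u; rewrite sXY.
Qed.

Lemma NB_self (T : finType) (e : rel T) (X : {set T}) w :
  w \in X -> w \in NB e X.
Proof. by move=> wX; rewrite inE; apply/existsP; exists w; rewrite wX eqxx. Qed.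

Lemma NB_edge (T : finType) (e : rel T) (X : {set T}) u w :
  u \in X -> e u w -> w \in NB e X.
Proof. by move=> uX euw; rewrite inE; apply/existsP; exists u; rewrite uX euw orbT. Qed.

Lemma card_NB (T : finType) (e : rel T) (X : {set T}) :
  #|NB e X| <= #|X| * (max_degree e).+1.
Proof.
set D := [set q : T * T | (q.1 \in X) && ((q.1 == q.2) || e q.1 q.2)].
have -> : NB e X = [set q.2 | q in D].
  apply/setP => w; rewrite inE; apply/existsP/imsetP.
    by case=> u /andP[uX H]; exists (u, w); rewrite // inE /= uX.
  by case=> [[u w']]; rewrite inE /= => /andP[uX H] ->; exists u; rewrite uX.
apply: leq_trans (leq_imset_card _ _) _.
rewrite card_setE.
have -> : \sum_(q : T * T) ((q.1 \in X) && ((q.1 == q.2) || e q.1 q.2) : nat) =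
   \sum_u \sum_y ((u \in X) && ((u == y) || e u y) : nat) by rewrite pair_big.
rewrite -sum1_card big_distrl /= [X in _ <= X]big_mkcond /=.
apply: leq_sum => u _.
case: ifP => uX; last by rewrite big1.
rewrite mul1n.
have -> : \sum_y (true && ((u == y) || e u y) : nat) = #|u |: [set y | e u y]|.
  rewrite card_setE; apply: eq_bigr => y _.
  by rewrite !inE eq_sym.
rewrite cardsU1 -add1n; apply: leq_add; first exact: leq_b1.
rewrite /max_degree; exact: (@leq_bigmax_cond _ xpredT (fun x => #|[set y | e x y]|) u).
Qed.

Lemma tw_spec (T : finType) (e : rel T) : tw_prop e (treewidth e).
Proof.
rewrite /treewidth; case: ex_minnP => k; rewrite /tw_pred.
by case: excluded_middle_informative.
Qed.

Lemma tw_le (T : finType) (e : rel T) k : tw_prop e k -> treewidth e <= k.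
Proof.
move=> H; rewrite /treewidth; case: ex_minnP => m _; apply.
by rewrite /tw_pred; case: excluded_middle_informative.
Qed.

Lemma pw_spec (T : finType) (e : rel T) : pw_prop e (pathwidth e).
Proof.
rewrite /pathwidth; case: ex_minnP => k; rewrite /pw_pred.
by case: excluded_middle_informative.
Qed.

Lemma pw_le (T : finType) (e : rel T) k : pw_prop e k -> pathwidth e <= k.
Proof.
move=> H; rewrite /pathwidth; case: ex_minnP => m _; apply.
by rewrite /pw_pred; case: excluded_middle_informative.
Qed.

Lemma vc_spec (T : finType) (e : rel T) :
  exists A : {set T}, is_vertex_cover e A /\ #|A| = vertex_cover_number e.
Proof.
rewrite /vertex_cover_number; case: ex_minnP => k /existsP[A /andP[H /eqP E]] _.
by exists A.
Qed.

Lemma bag_le (T : finType) n (B : 'I_n -> {set T}) k (t : 'I_n) :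
  width B <= k -> #|B t| <= k.+1.
Proof.
rewrite /width => H.
have := @leq_bigmax_cond _ xpredT (fun i => #|B i|) t isT.
move: H; set M := \max_(i < n) #|B i|; lia.
Qed.

Lemma width_le (T : finType) n (B : 'I_n -> {set T}) k :
  (forall t, #|B t| <= k.+1) -> width B <= k.
Proof.
move=> H; rewrite /width.
have : \max_(i < n) #|B i| <= k.+1 by apply/bigmax_leqP => i _; exact: H.
set M := \max_(i < n) #|B i|; lia.
Qed.

Lemma tw_from (T S : finType) (e : rel T) (et : rel S) (B : S -> {set T}) k :
 0 < #|S| -> symmetric et -> irreflexive et -> (forall i j, connect et i j) ->
 #|[set p : S * S | et p.1 p.2]| = 2 * (#|S| - 1) ->
 (forall v, exists i, v \in B i) ->
 (forall u v, e u v -> exists i, (u \in B i) && (v \in B i)) ->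
 (forall v i j, v \in B i -> v \in B j ->
    connect (fun a b => [&& et a b, v \in B a & v \in B b]) i j) ->
 (forall i, #|B i| <= k.+1) -> tw_prop e k.
Proof.
move=> S0 Ssym Sirr Scon Scard Hcov Hedge Hconn Hw.
exists #|S|, (fun i j => et (enum_val i) (enum_val j)), (fun i => B (enum_val i)).
split; [|split].
- split=> //; split; first by move=> i j; exact: Ssym.
  split; first by move=> i; exact: Sirr.
  split.
    move=> i j; rewrite -(enum_valK i) -(enum_valK j).
    apply: (connect_map (e := et)) => [a b|]; last exact: Scon.
    by rewrite !enum_rankK.
  rewrite -Scard -(on_card_preimset (f := fun p : 'I_#|S| * 'I_#|S| => (enum_val p.1, enum_val p.2))).
    by apply: eq_card => p; rewrite !inE.
  exists (fun q : S * S => (enum_rank q.1, enum_rank q.2)) => [[a b]|[a b]] _ /=.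
    by rewrite !enum_valK.
  by rewrite !enum_rankK.
- split.
    by move=> v; have [i Hi] := Hcov v; exists (enum_rank i); rewrite enum_rankK.
  split.
    by move=> u v /Hedge[i Hi]; exists (enum_rank i); rewrite enum_rankK.
  move=> v i j Hi Hj; rewrite -(enum_valK i) -(enum_valK j).
  apply: (connect_map (e := fun a b => [&& et a b, v \in B a & v \in B b])) => [a b|].
    by rewrite !enum_rankK.
  exact: Hconn.
- by apply: width_le => t; exact: Hw.
Qed.

Lemma connect_mono (S : finType) (e e' : rel S) :
  (forall a b, e a b -> e' a b) -> forall x y, connect e x y -> connect e' x y.
Proof. by move=> H x y; apply: (connect_map (h := id)). Qed.

Lemma nb_conn (T : finType) (e : rel T) n (et : rel 'I_n) (B : 'I_n -> {set T}) w :
  is_decomposition e et B ->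
  forall t t', w \in NB e (B t) -> w \in NB e (B t') ->
  connect (fun a b => [&& et a b, w \in NB e (B a) & w \in NB e (B b)]) t t'.
Proof.
case=> _ [Hedge Hconn].
set R := (fun a b => [&& et a b, w \in NB e (B a) & w \in NB e (B b)]).
have Hw : forall s s', w \in B s -> w \in B s' -> connect R s s'.
  move=> s s' ws ws'; apply: connect_mono (Hconn w s s' ws ws') => a b /and3P[eab wa wb].
  by rewrite /R eab !NB_self.
have H : forall t, w \in NB e (B t) ->
   exists s, [/\ w \in B s, connect R t s & connect R s t].
  move=> t; rewrite inE => /existsP[u /andP[ut /orP[/eqP uw|euw]]].
    by exists t; rewrite -uw ut connect0.
  have [s /andP[us ws]] := Hedge u w euw.
  exists s; split=> //.
    apply: connect_mono (Hconn u t s ut us) => a b /and3P[eab ua ub].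
    by rewrite /R eab (NB_edge ua euw) (NB_edge ub euw).
  apply: connect_mono (Hconn u s t us ut) => a b /and3P[eab ua ub].
  by rewrite /R eab (NB_edge ua euw) (NB_edge ub euw).
move=> t t' /H[s [ws ts _]] /H[s' [ws' _ st']].
apply: connect_trans ts _; apply: connect_trans (Hw _ _ ws ws') st'.
Qed.

Lemma tw_product (T1 T2 : finType) (e1 : rel T1) (e2 : rel T2) (A : {set T1}) k :
  symmetric e2 -> is_vertex_cover e1 A -> tw_prop e2 k ->
  tw_prop (direct_prod e1 e2) (#|A| * k.+1 * (max_degree e2).+1).
Proof.
move=> sym2 HA [n [et [B [[n0 [esym [eirr [econ ecard]]]] [Hdec Hwd]]]]].
have Hdec' := Hdec; case: Hdec => Hcov [Hedge Hconn].
pose t0 := Ordinal n0.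
pose f := fun v : T2 => odflt t0 [pick i | v \in B i].
have fP : forall v, v \in B (f v).
  move=> v; rewrite /f; case: pickP => [i //|H].
  by have [i Hi] := Hcov v; rewrite H in Hi.
pose S := ('I_n + (T1 * T2))%type.
pose et' : rel S := fun x y => match x, y with
  | inl a, inl b => et a b
  | inl a, inr p => f p.2 == a
  | inr p, inl a => f p.2 == a
  | _, _ => false end.
pose BB : S -> {set T1 * T2} := fun x => match x with
  | inl t => setX A (NB e2 (B t))
  | inr p => p |: setX A (NB e2 [set p.2]) end.
apply: (tw_from (et := et') (B := BB)).
- by rewrite card_sum card_ord addn_gt0 n0.
- by case=> [a|p] [b|q] //=; exact: esym.
- by case=> [a|p] //=; exact: eirr.
- have Hc : forall x, connect et' x (inl t0) /\ connect et' (inl t0) x.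
    have Hl : forall a b, connect et' (inl a) (inl b).
      by move=> a b; apply: (connect_map (e := et) (h := inl)) => //; exact: econ.
    case=> [a|p]; first by split; apply: Hl.
    have h1 : connect et' (inr p) (inl (f p.2)) by apply: connect1; rewrite /= eqxx.
    have h2 : connect et' (inl (f p.2)) (inr p) by apply: connect1; rewrite /= eqxx.
    by split; [apply: connect_trans h1 _ | apply: connect_trans _ h2]; apply: Hl.
  by move=> x y; exact: connect_trans (Hc x).1 (Hc y).2.
- rewrite card_setE.
  have -> : \sum_(q : S * S) (et' q.1 q.2 : nat) = \sum_x \sum_y (et' x y : nat)
    by rewrite pair_big.
  rewrite big_sumType /=.
  under eq_bigr => i _ do rewrite big_sumType /=.
  under [X in _ + X]eq_bigr => i _ do rewrite big_sumType /=.
  have E1 : \sum_a \sum_b (et a b : nat) = 2 * (n - 1)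
    by rewrite -ecard card_setE pair_big.
  have E2 : \sum_(a : 'I_n) \sum_(q : T1 * T2) ((f q.2 == a) : nat) = #|{: (T1 * T2)%type}|.
    rewrite exchange_big /= -sum1_card; apply: eq_big => // q _; exact: sum_eq1.
  have E3 : \sum_(p : T1 * T2) (\sum_(b : 'I_n) ((f p.2 == b) : nat)
              + \sum_(q : T1 * T2) 0) = #|{: (T1 * T2)%type}|.
    rewrite -sum1_card; apply: eq_big => // q _; rewrite sum_eq1 big1 //.
  rewrite big_split /= E1 E2 E3 card_sum card_ord.
  rewrite ?card_prod.
  have := n0; move: (#|T1| * #|T2|) => N; lia.
- by move=> v; exists (inr v); exact: setU11.
- move=> [u1 u2] [v1 v2] /andP[/= e1uv e2uv].
  move/forallP/(_ u1)/forallP/(_ v1): HA; rewrite e1uv /= => /orP[uA|vA].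
    exists (inr (v1, v2)); rewrite /= setU11 andbT in_setU1 in_setX uA.
    by rewrite (NB_edge (set11 v2) (_ : e2 v2 u2)) ?orbT // sym2.
  exists (inr (u1, u2)); rewrite /= setU11 /= in_setU1 in_setX vA.
  by rewrite (NB_edge (set11 u2) e2uv) orbT.
- move=> [a w] x y Hx Hy.
  case: (boolP (a \in A)) => aA; last first.
    have Hin : forall z, (a, w) \in BB z -> z = inr (a, w).
      case=> [t|p] /=; first by rewrite in_setX /= (negPf aA).
      by rewrite in_setU1 in_setX /= (negPf aA) orbF => /eqP <-.
    by rewrite (Hin _ Hx) (Hin _ Hy) connect0.
  set R := (fun a0 b => [&& et' a0 b, (a, w) \in BB a0 & (a, w) \in BB b]).
  pose tt := fun z : S => match z with inl t => t | inr p => f p.2 end.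
  have Hz : forall z, (a, w) \in BB z ->
      [/\ w \in NB e2 (B (tt z)), connect R z (inl (tt z)) & connect R (inl (tt z)) z].
    case=> [t|p] Hz.
      split; [by move: Hz; rewrite /= in_setX => /andP[] | exact: connect0 | exact: connect0].
    have wN : w \in NB e2 (B (f p.2)).
      move: Hz; rewrite /= in_setU1 in_setX /= aA /= => /orP[/eqP <-|H].
        exact: NB_self (fP w).
      by apply: NB_sub H; rewrite sub1set fP.
    have Hin : (a, w) \in BB (inl (f p.2)) by rewrite /= in_setX aA wN.
    by split=> //; apply: connect1; rewrite /R Hz Hin /= eqxx.
  have [wx Hx1 Hx2] := Hz x Hx; have [wy Hy1 Hy2] := Hz y Hy.
  apply: connect_trans Hx1 _; apply: connect_trans _ Hy2.
  apply: (connect_map (e := fun a0 b => [&& et a0 b, w \in NB e2 (B a0) & w \in NB e2 (B b)]) (h := inl)).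
    by move=> c d /and3P[ecd wc wd]; rewrite /R /= ecd !in_setX aA wc wd.
  exact: nb_conn Hdec' _ _ wx wy.
- case=> [t|p] /=.
    rewrite cardsX; have := card_NB e2 (B t); have := bag_le t Hwd.
    set a := #|A|; set b := #|B t|; set c := #|NB e2 (B t)|; set d := max_degree e2.
    move=> H1 H2; apply: leq_trans (leqnSn _); rewrite -mulnA leq_mul2l.
    by apply/orP; right; apply: leq_trans H2 _; rewrite leq_mul2r H1 orbT.
  rewrite cardsU1 cardsX; have := card_NB e2 [set p.2]; rewrite cards1 mul1n.
  set a := #|A|; set c := #|NB e2 [set p.2]|; set d := max_degree e2.
  move=> H1; rewrite addnC -addn1; apply: leq_add; last exact: leq_b1.
  rewrite -mulnA leq_mul2l; apply/orP; right.
  by apply: leq_trans H1 _; rewrite leq_pmull.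
Qed.

Lemma path_R_sym m (Q : pred 'I_m) :
  symmetric (fun a b : 'I_m => [&& @path_rel m a b, Q a & Q b]).
Proof.
move=> a b; rewrite /path_rel.
by case: (Q a); case: (Q b); rewrite /= ?andbT ?andbF // orbC.
Qed.

Lemma pw_product (T1 T2 : finType) (e1 : rel T1) (e2 : rel T2) (A : {set T1}) k :
  symmetric e2 -> is_vertex_cover e1 A -> pw_prop e2 k ->
  pw_prop (direct_prod e1 e2) (#|A| * k.+1 * (max_degree e2).+1).
Proof.
move=> sym2 HA [n [B [n0 [Hdec Hwd]]]].
have Hdec' := Hdec; case: Hdec => Hcov [Hedge Hconn].
pose t0 := Ordinal n0.
pose f := fun v : T2 => odflt t0 [pick i | v \in B i].
have fP : forall v, v \in B (f v).
  move=> v; rewrite /f; case: pickP => [i //|H].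
  by have [i Hi] := Hcov v; rewrite H in Hi.
pose M := #|{: (T1 * T2)%type}|.+1.
pose m := n * M.
have M0 : 0 < M by [].
have rM : forall p : T1 * T2, enum_rank p < M by move=> p; exact: leqW (ltn_ord _).
have hlt : forall i : 'I_m, i %/ M < n by move=> i; rewrite ltn_divLR // ltn_ord.
pose h := fun i : 'I_m => Ordinal (hlt i).
have glt : forall p : T1 * T2, f p.2 * M + enum_rank p < m.
  move=> p; apply: (@leq_trans ((f p.2).+1 * M)).
    by rewrite mulSn addnC ltn_add2r.
  by rewrite leq_mul2r ltn_ord orbT.
pose g := fun p => Ordinal (glt p).
have hg : forall p, h (g p) = f p.2.
  by move=> p; apply: val_inj; rewrite /= divnMDl // divn_small ?addn0.
pose BP := fun i : 'I_m => setX A (NB e2 (B (h i))) :|: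
   [set p | (i : nat) == f p.2 * M + enum_rank p].
exists m, BP; split; first by rewrite muln_gt0 n0.
split; last first.
  apply: width_le => i.
  rewrite cardsU; apply: leq_trans (leq_subr _ _) _.
  rewrite -addn1; apply: leq_add.
    rewrite cardsX -mulnA leq_mul2l; apply/orP; right.
    apply: leq_trans (card_NB _ _) _; rewrite leq_mul2r (bag_le _ Hwd) orbT //.
  apply/card_le1_eqP => p q; rewrite !inE => /eqP Hp /eqP Hq.
  have Ep : i %% M = enum_rank p by rewrite Hp modnMDl modn_small.
  have Eq : i %% M = enum_rank q by rewrite Hq modnMDl modn_small.
  by apply: enum_rank_inj; apply: val_inj; rewrite /= -Ep -Eq.
split.
  by move=> v; exists (g v); rewrite in_setU; apply/orP; right; rewrite inE.
split.
  move=> [u1 u2] [v1 v2] /andP[/= e1uv e2uv].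
  move/forallP/(_ u1)/forallP/(_ v1): HA; rewrite e1uv /= => /orP[uA|vA].
    exists (g (v1, v2)); rewrite !in_setU !in_setX /= !inE eqxx orbT andbT uA /=.
    rewrite hg /=; apply/orP; left; apply/existsP; exists v2.
    by rewrite fP sym2 e2uv orbT.
  exists (g (u1, u2)); rewrite !in_setU !in_setX /= !inE eqxx orbT /= vA /=.
  rewrite hg /=; apply/orP; left; apply/existsP; exists u2.
  by rewrite fP e2uv orbT.
move=> [a w] i j Hi Hj.
case: (boolP (a \in A)) => aA; last first.
  have Hin : forall z : 'I_m, (a, w) \in BP z -> (z : nat) = g (a, w).
    move=> z; rewrite in_setU in_setX /= (negPf aA) /= inE.
    by move/eqP.
  have -> : i = j by apply: val_inj; rewrite /= (Hin _ Hi) (Hin _ Hj).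
  exact: connect0.
have key : forall z, ((a, w) \in BP z) = (w \in NB e2 (B (h z))).
  move=> z; rewrite in_setU in_setX aA /= [X in _ || X]inE.
  case E: (w \in NB e2 (B (h z))) => //=; apply/negbTE/negP => /eqP Ez.
  have : z = g (a, w) by apply: val_inj.
  by move=> Ez'; move: E; rewrite Ez' hg /= NB_self.
set R := (fun a0 b => [&& @path_rel m a0 b, (a, w) \in BP a0 & (a, w) \in BP b]).
have aux : forall x y : 'I_m, x <= y -> w \in NB e2 (B (h x)) -> w \in NB e2 (B (h y)) ->
    h y <= (h x).+1 -> connect R x y.
  move=> x y lxy Px Py hxy.
  have := interval_connect (Q := fun z => (a, w) \in BP z) lxy.
  apply => z /andP[xz zy].
  have h1 : h x <= h z by apply: leq_div2r.
  have h2 : h z <= h y by apply: leq_div2r.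
  rewrite key.
  have [E|E] : h z = h x \/ h z = h y.
    have : (h z == h x :> nat) || (h z == h y :> nat) by lia.
    by case/orP => /eqP E; [left|right]; apply: val_inj.
    by rewrite E.
  by rewrite E.
apply: (connect_lift (e := @path_rel n) (h := h) (P := fun t => w \in NB e2 (B t))) (erefl _) (erefl _).
- move=> t _; have tlt : t * M < m by rewrite /m ltn_mul2r M0 ltn_ord.
  by exists (Ordinal tlt); apply: val_inj; rewrite /= mulnK.
- move=> x y Px Py Hxy.
  have Hd : (h x <= (h y).+1) && (h y <= (h x).+1).
    case: Hxy => [E|]; first by rewrite E leqnSn.
    by rewrite /path_rel => /orP[] /eqP E; apply/andP; split; lia.
  case/andP: Hd => Hd1 Hd2.
  case: (leqP x y) => lxy; first exact: aux.
  rewrite (sym_connect_sym (path_R_sym _)).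
  exact: aux (ltnW lxy) Py Px Hd1.
- by rewrite -key.
- apply: nb_conn Hdec' _ _ _ _; by rewrite -key.
Qed.

Theorem mainTheorem18 (T1 T2 : finType) (e1 : rel T1) (e2 : rel T2) :
  symmetric e1 -> irreflexive e1 -> symmetric e2 -> irreflexive e2 ->
  connected_graph e1 -> connected_graph e2 ->
  treewidth (direct_prod e1 e2) <=
    vertex_cover_number e1 * (treewidth e2).+1 * (max_degree e2).+1
  /\
  pathwidth (direct_prod e1 e2) <=
    vertex_cover_number e1 * (pathwidth e2).+1 * (max_degree e2).+1.
Proof.
move=> _ _ sym2 _ _ _.
have [A [HA <-]] := vc_spec e1.
split.
  by apply: tw_le; apply: tw_product => //; exact: tw_spec.
by apply: pw_le; apply: pw_product => //; exact: pw_spec.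
Qed.
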